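(* Let $n,m\ge1$, $r>0$, let $\varphi_1,\dots,\varphi_n:\mathbb{R}\to[0,\infty)$ be nonnegative functions and $x_1,\dots,x_m\in\mathbb{R}$ such that for each $j$ there is $i$ with $\varphi_i(x_j)>0$. Set $v^1_i=\sqrt{r/n}$ for $i=1,\dots,n$. For $k\ge1$, given $v^k\in[0,\infty)^n$, let $u^k\in[0,\infty)^n$ with $\sum_i(u^k_i)^2=r$ be a point at which $\widehat l^{\,k}(u)=\prod_{j=1}^m\big(\sum_{i=1}^n u_iv^k_i\varphi_i(x_j)\big)$ attains its maximum over the sphere $\{u\in\mathbb{R}^n:\sum_iu_i^2=r\}$; let $\overline\theta^{k+1}>0$ satisfy $(\overline\theta^{k+1})^2\sum_i u^k_iv^k_i=r$ and set $v^{k+1}_i=\overline\theta^{k+1}\sqrt{u^k_iv^k_i}$. Let $w^k_i=|u^k_i-v^k_i|$. Then $\lim_{k\to\infty}w^k_i=0$ for every $i=1,\dots,n$. *)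

(* Defs.v *)
From HB Require Import structures.
From mathcomp Require Import all_boot all_order all_algebra.
From mathcomp Require Import all_classical all_reals all_analysis.
Set Implicit Arguments. Unset Strict Implicit. Unset Printing Implicit Defensive.
Import Order.TTheory GRing.Theory Num.Theory.
Local Open Scope ring_scope.

Definition lhat (R : realType) (n m : nat) (phi : 'I_n -> R -> R)
  (x : 'I_m -> R) (v u : 'I_n -> R) : R :=
  \prod_(j < m) \sum_(i < n) u i * v i * phi i (x j).

Definition on_sphere (R : realType) (n : nat) (r : R) (u : 'I_n -> R) : Prop :=
  \sum_(i < n) u i ^+ 2 = r.

(* Main.v *)
Require Import Defs.
From HB Require Import structures.
From mathcomp Require Import all_boot all_order all_algebra.
From mathcomp Require Import all_classical all_reals all_analysis.
From mathcomp Require Import ring lra.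
Import Order.TTheory GRing.Theory Num.Theory.
Import numFieldNormedType.Exports.
Local Open Scope classical_set_scope.
Local Open Scope ring_scope.

Theorem lemma8 (R : realType) (n m : nat) (r : R)
  (phi : 'I_n -> R -> R) (x : 'I_m -> R)
  (u v : nat -> 'I_n -> R) (theta : nat -> R) :
  (0 < n)%N -> (0 < m)%N -> 0 < r ->
  (forall i t, 0 <= phi i t) ->
  (forall j : 'I_m, exists i : 'I_n, 0 < phi i (x j)) ->
  (forall i, v 1%N i = Num.sqrt (r / n%:R)) ->
  (forall k : nat, (1 <= k)%N ->
     [/\ forall i, 0 <= u k i,
         on_sphere r (u k) &
         forall w : 'I_n -> R, on_sphere r w ->
           lhat phi x (v k) w <= lhat phi x (v k) (u k)]) ->
  (forall k : nat, (1 <= k)%N ->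
     [/\ 0 < theta k.+1,
         theta k.+1 ^+ 2 * (\sum_(i < n) u k i * v k i) = r &
         forall i, v k.+1 i = theta k.+1 * Num.sqrt (u k i * v k i)]) ->
  forall i : 'I_n, (fun k : nat => `|u k i - v k i| : R) @ \oo --> 0.
Proof.
move=> n0 m0 r0 phi0 phix v1 Hu Hv i.
have rn0 : 0 < r / n%:R by rewrite divr_gt0 // ltr0n.
have HV : forall k, (1 <= k)%N -> (forall i, 0 <= v k i) /\ on_sphere r (v k).
  elim=> [//|k IH] _.
  case: k IH => [_|k IH].
    split=> [j|]; first by rewrite v1 sqrtr_ge0.
    rewrite /on_sphere (eq_bigr (fun _ => r / n%:R)); last first.
      by move=> j _; rewrite v1 sqr_sqrtr // ltW.
    rewrite sumr_const card_ord -[_ *+ n]mulr_natr divfK //.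
    by rewrite pnatr_eq0 -lt0n.
  have [IH1 IH2] := IH isT.
  have [Hu1 Hu2 _] := Hu k.+1 isT.
  have [Ht1 Ht2 Ht3] := Hv k.+1 isT.
  split=> [j|]; first by rewrite Ht3 mulr_ge0 ?sqrtr_ge0 // ltW.
  rewrite /on_sphere (eq_bigr (fun j => theta k.+2 ^+ 2 * (u k.+1 j * v k.+1 j))).
    by rewrite -mulr_sumr.
  by move=> j _; rewrite Ht3 exprMn sqr_sqrtr // mulr_ge0.
set G := fun k => lhat phi x (v k) (v k).
have G0 : forall k, 0 <= G k.
  move=> k; apply: prodr_ge0 => j _; apply: sumr_ge0 => l _.
  by rewrite mulr_ge0 // -expr2 sqr_ge0.
have Step : forall k, (1 <= k)%N ->
   [/\ 1 <= theta k.+1 ^+ 2,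
       theta k.+1 ^+ 2 * G k <= G k.+1 &
       (u k i - v k i) ^+ 2 <= r *+ 2 * (theta k.+1 ^+ 2 - 1)].
  move=> k k1.
  have [Hu1 Hu2 Hu3] := Hu k k1.
  have [Ht1 Ht2 Ht3] := Hv k k1.
  have [Hv1 Hv2] := HV k k1.
  set t2 := theta k.+1 ^+ 2 in Ht2 *.
  set S := \sum_(l < n) u k l * v k l in Ht2.
  have HD : \sum_(l < n) (u k l - v k l) ^+ 2 = r + r - S *+ 2.
    transitivity (\sum_(l < n) (u k l ^+ 2 + v k l ^+ 2 - (u k l * v k l) *+ 2)).
      by apply: eq_bigr => l _; rewrite sqrrB; ring.
    by rewrite sumrB big_split /= sumrMnl Hu2 Hv2.
  have Hi : (u k i - v k i) ^+ 2 <= r + r - S *+ 2.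
    rewrite -HD (bigD1 i) //= lerDl; apply: sumr_ge0 => l _; exact: sqr_ge0.
  have D0 : 0 <= r + r - S *+ 2 by rewrite -HD; apply: sumr_ge0 => l _; exact: sqr_ge0.
  have S0 : 0 <= S by apply: sumr_ge0 => l _; exact: mulr_ge0.
  have t20 : 0 <= t2 by rewrite /t2 sqr_ge0.
  have St : S <= r by move: D0; rewrite mulr2n; lra.
  have t21 : 1 <= t2 by nra.
  split => //.
    have -> : G k.+1 = t2 ^+ m * lhat phi x (v k) (u k).
      rewrite /G /lhat -[m in t2 ^+ m]card_ord -prodr_const -big_split /=.
      apply: eq_bigr => j _; rewrite mulr_sumr; apply: eq_bigr => l _.
      rewrite !Ht3 /t2 mulrACA -expr2 -[Num.sqrt _ * _]expr2 sqr_sqrtr ?mulr_ge0 //.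
      by ring.
    have Hm : t2 <= t2 ^+ m.
      clear -t21 t20 m0; case: m m0 => // m' _.
      by rewrite exprS ler_peMr // exprn_ege1.
    apply: (le_trans (y := t2 ^+ m * G k)); first by apply: ler_wpM2r.
    apply: ler_wpM2l; first by rewrite exprn_ge0.
    exact: Hu3.
  apply: (le_trans Hi); rewrite -Ht2 mulr2n; nra.
have G1 : 0 < G 1.
  apply: prodr_gt0 => j _; have [i0 Hi0] := phix j.
  rewrite (bigD1 i0) //= v1 -expr2 sqr_sqrtr; last exact: ltW.
  have A : 0 < r / n%:R * phi i0 (x j) by rewrite mulr_gt0.
  have B : 0 <= \sum_(l < n | l != i0) v 1%N l * v 1%N l * phi l (x j).
    apply: sumr_ge0 => l _; rewrite v1 -expr2 sqr_sqrtr; last exact: ltW.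
    by rewrite mulr_ge0 // ltW.
  by rewrite ltr_pwDl.
have Gmono : forall k, (1 <= k)%N -> G k <= G k.+1.
  move=> k k1; have [s1 s2 _] := Step k k1; have := G0 k; nra.
have GgeG1 : forall k, (1 <= k)%N -> G 1 <= G k.
  elim=> [//|k IH] _; case: k IH => [//|k IH].
  by apply: le_trans (IH erefl) (Gmono k.+1 erefl).
set B := \prod_(j < m) \sum_(l < n) r * phi l (x j).
have GB : forall k, (1 <= k)%N -> G k <= B.
  move=> k k1; have [Hv1 Hv2] := HV k k1.
  apply: ler_prod => j _; apply/andP; split.
    apply: sumr_ge0 => l _; by rewrite mulr_ge0 // -expr2 sqr_ge0.
  apply: ler_sum => l _; apply: ler_wpM2r => //.
  rewrite -expr2 -Hv2 /on_sphere (bigD1 l) //= lerDl.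
  by apply: sumr_ge0 => p _; exact: sqr_ge0.
have Key : forall k, (1 <= k)%N ->
   (u k i - v k i) ^+ 2 <= (r *+ 2 * (G k.+1 - G k)) / G 1.
  move=> k k1; have [s1 s2 s3] := Step k k1.
  have := GgeG1 k k1; rewrite ler_pdivlMr // => h.
  have h2 : (theta k.+1 ^+ 2 - 1) * G 1 <= G k.+1 - G k by nra.
  apply: (le_trans (y := r *+ 2 * (theta k.+1 ^+ 2 - 1) * G 1)).
    by rewrite ler_wpM2r // ltW.
  by rewrite -mulrA ler_wpM2l // mulrn_wge0 // ltW.
set H := fun k => G k.+1.
have Hhomo : {homo H : p q / (p <= q)%N >-> p <= q}.
  by apply/nondecreasing_seqP => k; exact: Gmono.
have Hub : has_ubound (range H).
  by exists B => _ [k _ <-]; exact: GB.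
have HL := nondecreasing_cvgn Hhomo Hub.
set l := sup (range H) in HL.
have HL1 := HL; rewrite -cvg_shiftS in HL1.
have HD : (fun k => (r *+ 2 * (H k.+1 - H k)) / G 1) @ \oo --> (0:R).
  have -> : 0 = (r *+ 2 * (l - l)) / G 1 by rewrite subrr mulr0 mul0r.
  apply: cvgMr_tmp; apply: cvgMl_tmp; exact: cvgB.
have Hsq : (fun k => (u k i - v k i) ^+ 2) @ \oo --> (0:R).
  rewrite -(cvg_shiftS (fun k => (u k i - v k i) ^+ 2)).
  apply: (squeeze_cvgr _ (cvg_cst 0) HD).
  apply: nearW => k /=; rewrite sqr_ge0 /=.
  exact: (Key k.+1 isT).
have -> : (fun k => `|u k i - v k i|) = Num.sqrt \o (fun k => (u k i - v k i) ^+ 2).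
  by apply: funext => k /=; rewrite sqrtr_sqr.
rewrite -(sqrtr0 R); apply: continuous_cvg => //; exact: sqrt_continuous.
Qed.
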